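(* Let $\alpha \ge 1$, $\gamma \ge 1$, $A>0$ be constants. Let $n,\rho:[0,T]\times\mathbb{R}^3\to\mathbb{R}$, $u,H:[0,T]\times\mathbb{R}^3\to\mathbb{R}^3$ be $C^1$ functions with $n>0$, $\rho\ge 0$ and $\operatorname{div} H = 0$. Set $R=\rho+n$, $S=\rho/n$, $P=\rho^\alpha + A n^\gamma$, $q = P+\tfrac12|H|^2$, and $\frac{d}{dt}=\partial_t + (u\cdot\nabla)$. Regard $P$ as the function $$P(R,S)=\Big(\frac{RS}{S+1}\Big)^\alpha + A\Big(\frac{R}{S+1}\Big)^\gamma,$$ and let $$P_R=\frac{\partial P(R,S)}{\partial R}=\frac{\alpha}{R}\Big(\frac{RS}{S+1}\Big)^\alpha+\frac{\gamma A}{R}\Big(\frac{R}{S+1}\Big)^\gamma>0.$$ Then $(n,\rho,u,H)$ satisfies the two-fluid MHD system $$\partial_t n+\operatorname{div}(nu)=0,\quad \partial_t\rho+\operatorname{div}(\rho u)=0,\quad \partial_t((\rho+n)u)+\operatorname{div}((\rho+n)u\otimes u-H\otimes H)+\nabla q=0,\quad \partial_t H-\nabla\times(u\times H)=0$$ if and only if $U=(P,u,H,S)$ satisfies $$\frac{1}{RP_R}\frac{dP}{dt}+\operatorname{div}u=0,\quad R\frac{du}{dt}-(H\cdot\nabla)H+\nabla q=0,\quad \frac{dH}{dt}-(H\cdot\nabla)u+H\operatorname{div}u=0,\quad \frac{dS}{dt}=0 .$$ Moreover, the latter system can be written as $A_0(U)\partial_t U+\sum_{j=1}^3 A_j(U)\partial_j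 U=0$ with $A_0=\operatorname{diag}(1/(RP_R),R,R,R,1,1,1,1)$ and symmetric $8\times 8$ matrices $A_j(U)$, $j=1,2,3$; in particular it is a symmetric hyperbolic system ($A_0>0$) whenever $n>0$ and $\rho\ge0$.
   Context: This concerns a model of ideal compressible isentropic two-fluid magnetohydrodynamics: $n$ and $\rho$ are the densities of the two fluids, $u$ the common velocity, $H$ the magnetic field, $P$ the pressure, $q$ the total pressure. The quantity $S=\rho/n$ is an ''entropy-like'' function and $R=\rho+n$ the total density; note $n=R/(S+1)$, $\rho=RS/(S+1)$. *)

(* Defs.v *)
From HB Require Import structures.
From mathcomp Require Import all_boot all_order all_algebra.
From mathcomp Require Import all_classical all_reals all_analysis.
Set Implicit Arguments. Unset Strict Implicit. Unset Printing Implicit Defensive.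
Import Order.TTheory GRing.Theory Num.Theory.
Import numFieldNormedType.Exports.
Local Open Scope ring_scope.

Definition sfield (R : realType) := R -> 'rV[R]_3 -> R.
Definition vfield (R : realType) := 'I_3 -> sfield R.

Definition dt (R : realType) (f : sfield R) (t : R) (x : 'rV[R]_3) : R :=
  derive1 (fun s => f s x) t.
(* Space partial derivative  d_j f (t,x), j = 0,1,2 (= x_1,x_2,x_3). *)
Definition dx (R : realType) (j : 'I_3) (f : sfield R) (t : R) (x : 'rV[R]_3) : R :=
  derive (f t) x (delta_mx 0 j).

Definition inslab (R : realType) (T t : R) := 0 < t < T.

Definition C1on (R : realType) (T : R) (f : sfield R) : Prop :=
  forall t x, inslab T t ->
    derivable (fun s => f s x) t 1 /\
    (forall j : 'I_3, derivable (f t) x (delta_mx 0 j)) /\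
    {for (t, x), continuous (fun p : R * 'rV[R]_3 => dt f p.1 p.2)} /\
    (forall j : 'I_3,
       {for (t, x), continuous (fun p : R * 'rV[R]_3 => dx j f p.1 p.2)}).

Definition div (R : realType) (w : vfield R) : sfield R :=
  fun t x => \sum_(j < 3) dx j (w j) t x.
Definition matder (R : realType) (u : vfield R) (f : sfield R) : sfield R :=
  fun t x => dt f t x + \sum_(j < 3) u j t x * dx j f t x.
Definition crossf (R : realType) (a b : vfield R) : vfield R :=
  fun i t x => a (ordS i) t x * b (ordS (ordS i)) t x
             - a (ordS (ordS i)) t x * b (ordS i) t x.
Definition curl (R : realType) (w : vfield R) : vfield R :=
  fun i t x => dx (ordS i) (w (ordS (ordS i))) t x
             - dx (ordS (ordS i)) (w (ordS i)) t x.

Definition Pfun (R : realType) (alpha gamma A : R) (r s : R) : R :=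
  (r * s / (s + 1)) `^ alpha + A * (r / (s + 1)) `^ gamma.
Definition PRfun (R : realType) (alpha gamma A : R) (r s : R) : R :=
  alpha / r * (r * s / (s + 1)) `^ alpha + gamma * A / r * (r / (s + 1)) `^ gamma.

Section Fields.
Variables (R : realType) (alpha gamma A : R) (n rho : sfield R) (u H : vfield R).

Definition Rf : sfield R := fun t x => rho t x + n t x.
Definition Sf : sfield R := fun t x => rho t x / n t x.
Definition Pf : sfield R := fun t x => rho t x `^ alpha + A * n t x `^ gamma.
Definition qf : sfield R :=
  fun t x => Pf t x + 2^-1 * \sum_(i < 3) H i t x ^+ 2.
Definition PRf : sfield R := fun t x => PRfun alpha gamma A (Rf t x) (Sf t x).

Definition sys1_at (t : R) (x : 'rV[R]_3) : Prop :=
  [/\ dt n t x + div (fun j t x => n t x * u j t x) t x = 0,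
      dt rho t x + div (fun j t x => rho t x * u j t x) t x = 0,
      (forall i : 'I_3,
        dt (fun t x => Rf t x * u i t x) t x
        + \sum_(j < 3) dx j (fun t x => Rf t x * u i t x * u j t x
                                     - H i t x * H j t x) t x
        + dx i qf t x = 0) &
      (forall i : 'I_3, dt (H i) t x - curl (crossf u H) i t x = 0)].

Definition eqP_lhs : sfield R :=
  fun t x => 1 / (Rf t x * PRf t x) * matder u Pf t x + div u t x.
Definition equ_lhs (i : 'I_3) : sfield R :=
  fun t x => Rf t x * matder u (u i) t x
             - \sum_(j < 3) H j t x * dx j (H i) t x + dx i qf t x.
Definition eqH_lhs (i : 'I_3) : sfield R :=
  fun t x => matder u (H i) t x - \sum_(j < 3) H j t x * dx j (u i) t x
             + H i t x * div u t x.
Definition eqS_lhs : sfield R := fun t x => matder u Sf t x.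

Definition sys2_at (t : R) (x : 'rV[R]_3) : Prop :=
  [/\ eqP_lhs t x = 0, (forall i, equ_lhs i t x = 0),
      (forall i, eqH_lhs i t x = 0) & eqS_lhs t x = 0].

Definition Ucomp (k : 'I_8) : sfield R :=
  if (k == 0 :> nat) then Pf
  else if (k <= 3)%N then u (inord (k - 1))
  else if (k <= 6)%N then H (inord (k - 4))
  else Sf.
Definition Ecomp (k : 'I_8) : sfield R :=
  if (k == 0 :> nat) then eqP_lhs
  else if (k <= 3)%N then equ_lhs (inord (k - 1))
  else if (k <= 6)%N then eqH_lhs (inord (k - 4))
  else eqS_lhs.

Definition Uvec (t : R) (x : 'rV[R]_3) : 'cV[R]_8 := \col_k Ucomp k t x.
Definition dtU (t : R) (x : 'rV[R]_3) : 'cV[R]_8 := \col_k dt (Ucomp k) t x.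
Definition dxU (j : 'I_3) (t : R) (x : 'rV[R]_3) : 'cV[R]_8 :=
  \col_k dx j (Ucomp k) t x.
Definition Evec (t : R) (x : 'rV[R]_3) : 'cV[R]_8 := \col_k Ecomp k t x.

Definition A0 (t : R) (x : 'rV[R]_3) : 'M[R]_8 :=
  diag_mx (\row_(k < 8) (if (k == 0 :> nat) then 1 / (Rf t x * PRf t x)
                         else if (k <= 3)%N then Rf t x else 1)).
End Fields.

(* Main.v *)
Require Import Defs.
From HB Require Import structures.
From mathcomp Require Import all_boot all_order all_algebra.
From mathcomp Require Import all_classical all_reals all_analysis.
From mathcomp Require Import ring lra.
Import Order.TTheory GRing.Theory Num.Theory.
Import numFieldNormedType.Exports.
Local Open Scope ring_scope.

Set Implicit Arguments. Unset Strict Implicit.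
Local Open Scope classical_set_scope.

Section Gen1.
Variables (R : realType).
Lemma fermat (f : R -> R) c e : 0 < e -> derivable f c 1 ->
  (forall h, `|h| < e -> f c <= f (h + c)) -> 'D_1 f c = 0.
Proof.
move=> e0 fdrv cmin.
apply/eqP; rewrite eq_le; apply/andP; split.
  rewrite ['D_1 f c]cvg_at_leftE; last exact: fdrv.
  apply: limr_le.
    rewrite -(cvg_at_leftE (fun h => h^-1 *: ((f \o shift c) _ - f c))) //.
    apply: cvg_trans fdrv; apply: cvg_app.
    move=> A [e' egt0 Ae]; exists e' => // x xe xgt0; apply: Ae => //.
    exact/ltr0_neq0.
  near=> h; apply: mulr_le0_ge0.
    by rewrite invr_le0; apply: ltW; near: h; exists 1 => /=.
  rewrite subr_ge0 [_%:A]mulr1 /=; apply: cmin; near: h.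
  by exists e => // h /=; rewrite distrC subr0.
rewrite ['D_1 f c]cvg_at_rightE; last exact: fdrv.
apply: limr_ge.
  rewrite -(cvg_at_rightE (fun h => h^-1 *: ((f \o shift c) _ - f c))) //.
  apply: cvg_trans fdrv; apply: cvg_app.
  move=> A [e' egt0 Ae]; exists e' => // x xe xgt0; apply: Ae => //.
  exact/lt0r_neq0.
near=> h; apply: mulr_ge0.
  by rewrite invr_ge0; apply: ltW; near: h; exists 1 => /=.
rewrite subr_ge0 [_%:A]mulr1 /=; apply: cmin; near: h.
by exists e => // h /=; rewrite distrC subr0.
Unshelve. all: by end_near. Qed.

Lemma powle (y alpha : R) : 1 <= alpha -> 0 <= y <= 1 -> y `^ alpha <= y.
Proof.
move=> a1 /andP[y0 y1]; have [->|yp] := eqVneq y 0.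
  by rewrite powR0 // gt_eqF // (lt_le_trans ltr01 a1).
by apply: ge1r_powR => //; rewrite y1 lt_neqAle eq_sym yp y0.
Qed.

Lemma powder (f : R -> R) c alpha e : 1 <= alpha -> 0 < e -> derivable f c 1 ->
  (forall h, `|h| < e -> 0 <= f (h + c)) ->
  derivable (fun y => f y `^ alpha) c 1 /\
  'D_1 (fun y => f y `^ alpha) c = alpha * f c `^ (alpha - 1) * 'D_1 f c.
Proof.
move=> a1 e0 fdrv fpos.
have fc0 : 0 <= f c by have := fpos 0; rewrite normr0 add0r; apply.
have a0 : alpha != 0 by rewrite gt_eqF // (lt_le_trans ltr01 a1).
rewrite le_eqVlt in fc0; case/orP: fc0 => [/eqP fc0 | fcp].
  have D0 : 'D_1 f c = 0.
    apply: (@fermat f c e e0 fdrv) => h /fpos; by rewrite fc0.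
  rewrite D0 mulr0.
  suff qcv : (fun h : R => h^-1 *: (((fun y => f y `^ alpha) \o shift c) (h *: 1) - f c `^ alpha)) @ 0^' --> (0:R).
    split; first by apply/cvg_ex; exists 0.
    exact: cvg_lim qcv.
  have qF : (fun h : R => h^-1 *: ((f \o shift c) (h *: 1) - f c)) @ 0^' --> 'D_1 f c.
    exact: fdrv.
  rewrite D0 in qF.
  have /derivable1P/derivable1_diffP/differentiable_continuous := fdrv.
  move=> /continuous_withinNx; rewrite scale0r add0r => fcont.
  have f1 : \forall h \near 0^', f (h *: 1 + c) < 1.
    have := cvgr_lt (f c) fcont 1; rewrite -fc0; by move=> /(_ _ ltr01).
  have fe : \forall h \near (0:R)^', `|h| < e.
    by apply: nbhs_dnbhs; exists e => // h /=; rewrite distrC subr0.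
  apply/cvgr0Pnorm_lt => eps eps0.
  move/cvgr0Pnorm_lt: qF => /(_ eps eps0) qF.
  near=> h.
  apply: le_lt_trans (near qF h _) => /=.
  rewrite -fc0 powR0 // subr0 subr0 !normrZ ler_wpM2l //.
  have hp : 0 <= f (h *: 1 + c).
    rewrite [h *: 1]mulr1; apply: fpos; exact: (near fe h).
  rewrite !ger0_norm ?powR_ge0 //; apply: powle => //.
  by rewrite hp ltW // (near f1 h).
  by []. have gd : derivable (fun y : R => y `^ alpha) (f c) 1.
  by apply: (@derivable_powR R 1 alpha (f c)); rewrite in_itv /= andbT.
have comp : derivable ((fun y : R => y `^ alpha) \o f) c 1.
  apply/derivable1_diffP; apply: differentiable_comp; exact/derivable1_diffP.
split; first exact: comp.
have := derive1_comp fdrv gd; rewrite !derive1E => ->.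
rewrite -derive1E powR_derive1 // in_itv /= andbT //.
Unshelve. all: by end_near. Qed.

End Gen1.

Section Gen.
Variables (R : realType) (V : normedModType R).
Implicit Types (F G : V -> R) (a v : V).
Lemma gD F G a v : derivable F a v -> derivable G a v ->
  derive (fun y => F y + G y) a v = derive F a v + derive G a v /\
  derivable (fun y => F y + G y) a v.
Proof. move=> dF dG; split; [exact: deriveD | exact: derivableD]. Qed.

Lemma gB F G a v : derivable F a v -> derivable G a v ->
  derive (fun y => F y - G y) a v = derive F a v - derive G a v /\
  derivable (fun y => F y - G y) a v.
Proof. move=> dF dG; split; [exact: deriveB | exact: derivableB]. Qed.

Lemma gM F G a v : derivable F a v -> derivable G a v ->
  derive (fun y => F y * G y) a v = F a * derive G a v + G a * derive F a v /\
  derivable (fun y => F y * G y) a v.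
Proof. move=> dF dG; split; [exact: deriveM | exact: derivableM]. Qed.

Lemma gV F a v : F a != 0 -> derivable F a v ->
  derive (fun y => (F y)^-1) a v = - (F a) ^- 2 * derive F a v /\
  derivable (fun y => (F y)^-1) a v.
Proof. move=> dF dG; split; [exact: deriveV | exact: derivableV]. Qed.


Lemma gline F a v : derive F a v = 'D_1 (fun h : R => F (h *: v + a)) 0.
Proof.
rewrite /derive; set g1 := fun h => h^-1 *: _; set g2 := fun h => h^-1 *: _.
suff -> : g1 = g2 by [].
by rewrite funeqE /g1 /g2 => h /=; rewrite addr0 scale0r add0r [_%:A]mulr1.
Qed.

Lemma gpow F a v (alpha e : R) : 1 <= alpha -> 0 < e -> derivable F a v ->
  (forall h : R, `|h| < e -> 0 <= F (h *: v + a)) ->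
  derive (fun y => F y `^ alpha) a v = alpha * F a `^ (alpha - 1) * derive F a v /\
  derivable (fun y => F y `^ alpha) a v.
Proof.
move=> a1 e0 dF pos.
have dF1 := (derivable1P F a v).1 dF.
have := @powder R (fun h : R => F (h *: v + a)) 0 alpha e a1 e0 dF1.
rewrite scale0r add0r.
case=> [h /pos|]; first by rewrite addr0.
move=> d1 e1; split; last exact/derivable1P.
by rewrite !gline e1.
Qed.

Lemma gK (k : R) a v : derive (fun _ : V => k) a v = 0 /\ derivable (fun _ : V => k) a v.
Proof. split; [exact: derive_cst | exact: derivable_cst]. Qed.
End Gen.

Local Close Scope classical_set_scope.

Set Implicit Arguments. Unset Strict Implicit.

Section Fld.
Variable R : realType.
Implicit Types (f g : sfield R) (t : R) (x : 'rV[R]_3).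

Definition Dd (d : option 'I_3) f t x :=
  match d with None => dt f t x | Some j => dx j f t x end.
Definition Der (d : option 'I_3) f t x : Prop :=
  match d with None => derivable (fun s => f s x) t 1
  | Some j => derivable (f t) x (delta_mx 0 j) end.
Definition Pos (d : option 'I_3) f t x : Prop :=
  exists2 e : R, 0 < e & forall h : R, `|h| < e -> 0 <=
    match d with None => f (h + t) x | Some j => f t (h *: delta_mx 0 j + x) end.

Lemma DdD d f g t x : Der d f t x -> Der d g t x ->
  Dd d (fun t x => f t x + g t x) t x = Dd d f t x + Dd d g t x /\
  Der d (fun t x => f t x + g t x) t x.
Proof. case: d => [j|] /=; rewrite /dx /dt ?derive1E; exact: gD. Qed.

Lemma DdB d f g t x : Der d f t x -> Der d g t x ->
  Dd d (fun t x => f t x - g t x) t x = Dd d f t x - Dd d g t x /\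
  Der d (fun t x => f t x - g t x) t x.
Proof. case: d => [j|] /=; rewrite /dx /dt ?derive1E; exact: gB. Qed.

Lemma DdM d f g t x : Der d f t x -> Der d g t x ->
  Dd d (fun t x => f t x * g t x) t x = f t x * Dd d g t x + g t x * Dd d f t x /\
  Der d (fun t x => f t x * g t x) t x.
Proof. case: d => [j|] /=; rewrite /dx /dt ?derive1E; exact: gM. Qed.

Lemma DdV d f t x : f t x != 0 -> Der d f t x ->
  Dd d (fun t x => (f t x)^-1) t x = - (f t x) ^- 2 * Dd d f t x /\
  Der d (fun t x => (f t x)^-1) t x.
Proof. case: d => [j|] /=; rewrite /dx /dt ?derive1E; exact: gV. Qed.

Lemma DdK d (k : R) t x :
  Dd d (fun _ _ => k) t x = 0 /\ Der d (fun _ _ => k) t x.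
Proof. case: d => [j|] /=; rewrite /dx /dt ?derive1E; exact: gK. Qed.

Lemma DdP d f t x (alpha : R) : 1 <= alpha -> Der d f t x -> Pos d f t x ->
  Dd d (fun t x => f t x `^ alpha) t x = alpha * (f t x `^ (alpha - 1)) * Dd d f t x /\
  Der d (fun t x => f t x `^ alpha) t x.
Proof.
move=> a1; case: d => [j|] /= dF [e e0 pos]; rewrite /dx /dt ?derive1E.
  exact: (@gpow _ _ _ _ _ _ _ a1 e0 dF pos).
apply: (@gpow _ _ _ _ _ _ _ a1 e0 dF) => h /pos; by rewrite [h *: 1]mulr1.
Qed.

End Fld.

Set Implicit Arguments. Unset Strict Implicit.

Section Point.
Variables (R : realType) (alpha gamma A : R) (n rho : sfield R) (u H : vfield R)
  (t : R) (x : 'rV[R]_3).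
Hypotheses (a1 : 1 <= alpha) (g1 : 1 <= gamma) (A0 : 0 < A).
Hypotheses (dn : forall d, Der d n t x) (dr : forall d, Der d rho t x)
  (du : forall i d, Der d (u i) t x) (dH : forall i d, Der d (H i) t x)
  (pn : forall d, Pos d n t x) (pr : forall d, Pos d rho t x)
  (n0 : 0 < n t x) (r0 : 0 <= rho t x).

Lemma C1 d (f : sfield R) j : Der d f t x ->
  Dd d (fun t x => f t x * u j t x) t x = f t x * Dd d (u j) t x + u j t x * Dd d f t x.
Proof. by move=> df; rewrite (DdM df (du j d)).1. Qed.

Lemma dR d : Der d (Rf n rho) t x.
Proof. exact: (DdD (dr d) (dn d)).2. Qed.

Lemma C3 d i : Dd d (fun t x => Rf n rho t x * u i t x) t x =
  Rf n rho t x * Dd d (u i) t x + u i t x * (Dd d rho t x + Dd d n t x).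
Proof.
rewrite (DdM (dR d) (du i d)).1; congr (_ + _ * _).
exact: (DdD (dr d) (dn d)).1.
Qed.

Lemma C4 d i j : Dd d (fun t x => Rf n rho t x * u i t x * u j t x - H i t x * H j t x) t x =
  Rf n rho t x * u i t x * Dd d (u j) t x
  + u j t x * (Rf n rho t x * Dd d (u i) t x + u i t x * (Dd d rho t x + Dd d n t x))
  - (H i t x * Dd d (H j) t x + H j t x * Dd d (H i) t x).
Proof.
have dRu := (DdM (dR d) (du i d)).2.
rewrite (DdB (DdM dRu (du j d)).2 (DdM (dH i d) (dH j d)).2).1.
rewrite (DdM dRu (du j d)).1 (DdM (dH i d) (dH j d)).1 -C3 //.
Qed.

Lemma C5 d : Dd d (Pf alpha gamma A n rho) t x =
  alpha * (rho t x `^ (alpha - 1)) * Dd d rho t x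
  + A * (gamma * (n t x `^ (gamma - 1)) * Dd d n t x).
Proof.
rewrite /Pf.
have [e1 d1] := DdP a1 (dr d) (pr d).
have [e2 d2] := DdP g1 (dn d) (pn d).
have [e3 d3] := DdK d A t x.
have [e4 d4] := DdM d3 d2.
rewrite (DdD d1 d4).1 e1 e4 e2 e3; ring.
Qed.

Lemma C6 d : Dd d (Sf n rho) t x =
  rho t x * (- (n t x) ^- 2 * Dd d n t x) + (n t x)^-1 * Dd d rho t x.
Proof.
rewrite /Sf.
have [e1 d1] := DdV (lt0r_neq0 n0) (dn d).
by rewrite (DdM (dr d) d1).1 e1.
Qed.

Lemma C7 d a b c e : Dd d (fun t x => u a t x * H b t x - u c t x * H e t x) t x =
  u a t x * Dd d (H b) t x + H b t x * Dd d (u a) t x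
  - (u c t x * Dd d (H e) t x + H e t x * Dd d (u c) t x).
Proof.
by rewrite (DdB (DdM (du a d) (dH b d)).2 (DdM (du c d) (dH e d)).2).1
  (DdM (du a d) (dH b d)).1 (DdM (du c d) (dH e d)).1.
Qed.

End Point.

Set Implicit Arguments. Unset Strict Implicit.

Definition i0 : 'I_3 := @Ordinal 3 0 isT.
Definition i1 : 'I_3 := @Ordinal 3 1 isT.
Definition i2 : 'I_3 := @Ordinal 3 2 isT.

Lemma sum3 (R : realType) (F : 'I_3 -> R) : \sum_(j < 3) F j = F i0 + F i1 + F i2.
Proof.
rewrite !big_ord_recr big_ord0 /= GRing.add0r. congr (F _ + F _ + F _); exact: val_inj.
Qed.

Lemma ord3 (i : 'I_3) : i = i0 \/ i = i1 \/ i = i2.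
Proof.
case: i => [[|[|[|k]]] Hk]; [left|right;left|right;right|by []]; exact: val_inj.
Qed.

Lemma oS0 : ordS i0 = i1. Proof. exact: val_inj. Qed.
Lemma oS1 : ordS i1 = i2. Proof. exact: val_inj. Qed.
Lemma oS2 : ordS i2 = i0. Proof. exact: val_inj. Qed.

Lemma eq_sub0 (R : realType) (a b c : R) : c = 0 -> a = b - c -> a = b.
Proof. by move=> -> ->; rewrite subr0. Qed.

Ltac genat t x := repeat match goal with
  | |- context [dx ?j ?f t x] => generalize (dx j f t x); intro
  | |- context [dt ?f t x] => generalize (dt f t x); intro
  | |- context [Dd ?d ?f t x] => generalize (Dd d f t x); intro
  | |- context [?f t x] => generalize (f t x); intro
  end.

Lemma alg (R : realType) (nn r p m al ga A an ar c : R) : 0 < nn -> 0 <= r -> 0 <= p -> 0 < m ->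
  0 < al -> 0 < ga -> 0 < A ->
 ((an + nn * c = 0 /\ ar + r * c = 0) <->
  (1 / (al * (p * r) + ga * A * (m * nn)) * (al * p * ar + A * (ga * m * an)) + c = 0 /\
   r * (- nn ^- 2 * an) + nn^-1 * ar = 0)).
Proof.
move=> n0 r0 p0 m0 al0 ga0 A0.
have K0 : 0 < al * (p * r) + ga * A * (m * nn).
  have h1 : 0 <= al * (p * r) by rewrite mulr_ge0 ?mulr_ge0 // ltW.
  have h2 : 0 < ga * A * (m * nn) by rewrite !mulr_gt0.
  lra.
have Kn : al * (p * r) + ga * A * (m * nn) != 0 by rewrite gt_eqF.
have nn0 : nn != 0 by rewrite gt_eqF.
have E1 : forall a b, al * p * a + A * (ga * m * b) = (al * p * a + A * (ga * m * b)) by [].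
set K := al * (p * r) + ga * A * (m * nn) in K0 Kn *.
have KE : K = al * (p * r) + ga * A * (m * nn) by [].
clearbody K.
split.
  case=> e1 e2.
  have -> : an = - nn * c by rewrite mulNr; lra.
  have -> : ar = - r * c by rewrite mulNr; lra.
  have -> : al * p * (- r * c) + A * (ga * m * (- nn * c)) = - K * c by rewrite KE; ring.
  by split; field.
case=> e1 e2.
have ear : ar = r * an / nn.
  have : nn^-1 * (ar - r * an / nn) = 0 by rewrite -e2; field.
  move/eqP; rewrite mulf_eq0 invr_eq0 (negbTE nn0) /= subr_eq0 => /eqP //.
have ean : an = - nn * c.
  have : al * p * ar + A * (ga * m * an) = K * (an / nn).
    by rewrite ear KE; field.
  move=> h; rewrite h in e1.
  have : 1 / K * (K * (an / nn)) = an / nn by rewrite div1r mulKf.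
  move=> h2; rewrite h2 in e1.
  have : an = nn * (an / nn) by field.
  move=> ->; have -> : an / nn = - c by lra.
  ring.
split.
  by rewrite ean; ring.
by rewrite ear ean; field.
Qed.

Section Point2.
Variables (R : realType) (alpha gamma A : R) (n rho : sfield R) (u H : vfield R)
  (t : R) (x : 'rV[R]_3).
Hypotheses (a1 : 1 <= alpha) (g1 : 1 <= gamma) (A0 : 0 < A).
Hypotheses (dn : forall d, Der d n t x) (dr : forall d, Der d rho t x)
  (du : forall i d, Der d (u i) t x) (dH : forall i d, Der d (H i) t x)
  (pn : forall d, Pos d n t x) (pr : forall d, Pos d rho t x)
  (n0 : 0 < n t x) (r0 : 0 <= rho t x).

Let C1x (f : sfield R) k j (df : Der (Some k) f t x) :
  dx k (fun t x => f t x * u j t x) t x = f t x * dx k (u j) t x + u j t x * dx k f t x :=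
  C1 du j df.

Lemma I1 (f : sfield R) (df : forall d, Der d f t x) :
  dt f t x + div (fun j t x => f t x * u j t x) t x = matder u f t x + f t x * div u t x.
Proof.
rewrite /div /matder /= !sum3 !C1x //; genat t x; ring.
Qed.


Lemma I3 i : div H t x = 0 ->
  dt (fun t x => Rf n rho t x * u i t x) t x
  + \sum_(j < 3) dx j (fun t x => Rf n rho t x * u i t x * u j t x
                                 - H i t x * H j t x) t x
  + dx i (qf alpha gamma A n rho H) t x =
  equ_lhs alpha gamma A n rho u H i t x
  + u i t x * ((matder u n t x + n t x * div u t x)
               + (matder u rho t x + rho t x * div u t x)).
Proof.
move=> dH0.
have E : forall j, dx j (fun t x => Rf n rho t x * u i t x * u j t x
                                 - H i t x * H j t x) t x = _ :=
  fun j => C4 dn dr du dH (Some j) i j.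
have E2 : dt (fun t x => Rf n rho t x * u i t x) t x = _ := C3 dn dr du None i.
rewrite E2.
under eq_bigr => j _ do rewrite E.
apply: (@eq_sub0 _ _ _ (H i t x * div H t x)); first by rewrite dH0 mulr0.
rewrite /equ_lhs /matder /div /Rf /= !sum3 /=; genat t x; ring.
Qed.

Lemma I4 i : div H t x = 0 ->
  dt (H i) t x - curl (crossf u H) i t x = eqH_lhs u H i t x.
Proof.
move=> dH0.
apply: (@eq_sub0 _ _ _ (u i t x * div H t x)); first by rewrite dH0 mulr0.
rewrite /curl /crossf /=.
have E : forall k a b c e, dx k (fun t x => u a t x * H b t x - u c t x * H e t x) t x = _ :=
  fun k => C7 du dH (Some k).
rewrite !E.
rewrite /eqH_lhs /matder /div !sum3.
case: (ord3 i) => [->|[->|->]]; rewrite ?oS0 ?oS1 ?oS2 ?oS0 ?oS1 ?oS2 ?oS0 ?oS1 ?oS2 /=; genat t x; ring.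
Qed.


Lemma al0 : 0 < alpha. Proof. exact: lt_le_trans ltr01 a1. Qed.
Lemma ga0 : 0 < gamma. Proof. exact: lt_le_trans ltr01 g1. Qed.

Lemma KR : Rf n rho t x * PRf alpha gamma A n rho t x =
  alpha * (rho t x `^ (alpha - 1) * rho t x) + gamma * A * (n t x `^ (gamma - 1) * n t x).
Proof.
rewrite /PRf /PRfun /Rf /Sf.
set r := rho t x; set m := n t x.
have m0 : m != 0 by rewrite gt_eqF.
have R0 : r + m != 0 by rewrite gt_eqF // ltr_wpDl.
have S0 : r / m + 1 != 0.
  have -> : r / m + 1 = (r + m) / m by field.
  by rewrite mulf_neq0 // invr_eq0.
have e1 : (r + m) * (r / m) / (r / m + 1) = r by field; rewrite ?m0 ?R0.
have e2 : (r + m) / (r / m + 1) = m by field; rewrite ?m0 ?R0.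
rewrite e1 e2 (mulrC (r `^ _)) (mulrC (m `^ (gamma - 1))) !mulr_powRB1 //;
  [|exact: ltW|exact: ga0|exact: al0].
by field.
Qed.

Lemma I5 : eqS_lhs n rho u t x =
  rho t x * (- (n t x) ^- 2 * matder u n t x) + (n t x)^-1 * matder u rho t x.
Proof.
have Et : dt (Sf n rho) t x = _ := C6 dn dr n0 None.
have Ex : forall k, dx k (Sf n rho) t x = _ := fun k => C6 dn dr n0 (Some k).
rewrite /eqS_lhs /matder !sum3 Et !Ex /=; genat t x; ring.
Qed.

Lemma I6 : eqP_lhs alpha gamma A n rho u t x =
  1 / (alpha * (rho t x `^ (alpha - 1) * rho t x) + gamma * A * (n t x `^ (gamma - 1) * n t x))
  * (alpha * rho t x `^ (alpha - 1) * matder u rho t x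
     + A * (gamma * n t x `^ (gamma - 1) * matder u n t x)) + div u t x.
Proof.
have Et : dt (Pf alpha gamma A n rho) t x = _ := C5 A a1 g1 dn dr pn pr None.
have Ex : forall k, dx k (Pf alpha gamma A n rho) t x = _ :=
  fun k => C5 A a1 g1 dn dr pn pr (Some k).
rewrite /eqP_lhs KR /matder !sum3 Et !Ex /=; genat t x; ring.
Qed.

Lemma point_equiv : div H t x = 0 ->
  (sys1_at alpha gamma A n rho u H t x <-> sys2_at alpha gamma A n rho u H t x).
Proof.
move=> dH0.
have Hal := @alg R (n t x) (rho t x) (rho t x `^ (alpha - 1)) (n t x `^ (gamma - 1))
  alpha gamma A (matder u n t x) (matder u rho t x) (div u t x) n0 r0 (powR_ge0 _ _)
  (powR_gt0 _ n0) al0 ga0 A0.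
rewrite /sys1_at /sys2_at (I1 dn) (I1 dr) I5 I6.
split.
  case=> e1 e2 e3 e4; have [eP eS] := Hal.1 (conj e1 e2); split => // i.
    by have := e3 i; rewrite I3 // e1 e2 addr0 mulr0 addr0.
  by rewrite -I4 // e4.
case=> eP eu eH eS; have [e1 e2] := Hal.2 (conj eP eS); split => // i.
  by rewrite I3 // e1 e2 addr0 mulr0 addr0; exact: eu.
by rewrite I4.
Qed.

End Point2.

Set Implicit Arguments. Unset Strict Implicit.

Section Point3.
Variables (R : realType) (alpha gamma A : R) (n rho : sfield R) (u H : vfield R)
  (t : R) (x : 'rV[R]_3).
Hypotheses (a1 : 1 <= alpha) (g1 : 1 <= gamma) (A0 : 0 < A).
Hypotheses (dn : forall d, Der d n t x) (dr : forall d, Der d rho t x)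
  (du : forall i d, Der d (u i) t x) (dH : forall i d, Der d (H i) t x)
  (pn : forall d, Pos d n t x) (pr : forall d, Pos d rho t x)
  (n0 : 0 < n t x) (r0 : 0 <= rho t x).

Lemma dPf d : Der d (Pf alpha gamma A n rho) t x.
Proof.
have [e1 d1] := DdP a1 (dr d) (pr d).
have [e2 d2] := DdP g1 (dn d) (pn d).
have [e3 d3] := DdK d A t x.
exact: (DdD d1 (DdM d3 d2).2).2.
Qed.

Lemma Cq d : Dd d (qf alpha gamma A n rho H) t x =
  Dd d (Pf alpha gamma A n rho) t x + \sum_(k < 3) H k t x * Dd d (H k) t x.
Proof.
have -> : qf alpha gamma A n rho H = fun t x => Pf alpha gamma A n rho t x
   + 2^-1 * (H i0 t x * H i0 t x + H i1 t x * H i1 t x + H i2 t x * H i2 t x).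
  by apply: funext => s; apply: funext => y; rewrite /qf sum3 !expr2.
have [e3 d3] := DdK d (2^-1) t x.
have M := fun k => DdM (dH k d) (dH k d).
have S1 := DdD (M i0).2 (M i1).2.
have S2 := DdD S1.2 (M i2).2.
have [e4 d4] := DdM d3 S2.2.
rewrite (DdD (dPf d) d4).1 e4 e3 S2.1 S1.1 (M i0).1 (M i1).1 (M i2).1 sum3.
by genat t x; field.
Qed.

End Point3.

Section Glob.
Variable (R : realType).

Lemma der_of (T : R) (f : sfield R) (hf : C1on T f) t x (ht : inslab T t) :
  forall d, Der d f t x.
Proof. by move=> [j|]; have [h1 [h2 _]] := hf t x ht; [exact: h2 | exact: h1]. Qed.

Lemma pos_of (T : R) (f : sfield R) (hp : forall t x, inslab T t -> 0 <= f t x) t x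
  (ht : inslab T t) : forall d, Pos d f t x.
Proof.
move: (ht) => /andP[t0 tT]; case => [j|].
  by exists 1 => // h _; apply: hp.
exists (Num.min t (T - t)); first by rewrite lt_min t0 subr_gt0.
move=> h; rewrite lt_min => /andP[/ltr_normlP [h1 _] /ltr_normlP [_ h2]].
apply: hp; apply/andP; split; lra.
Qed.

End Glob.

Set Implicit Arguments. Unset Strict Implicit.

Section Mat.
Variables (R : realType) (alpha gamma A : R).

Definition Ue (U : 'cV[R]_8) (m : nat) : R := U (inord m) 0.
Definition Nof (U : 'cV[R]_8) : R :=
  get (fun m : R => 0 < m /\ (Ue U 7 * m) `^ alpha + A * m `^ gamma = Ue U 0).
Definition Rof U := Nof U * (Ue U 7 + 1).
Definition Kof U := alpha * (Ue U 7 * Nof U) `^ alpha + gamma * A * Nof U `^ gamma.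
Definition c0 (j : 'I_3) U (p q : nat) : R :=
  let uj := Ue U j.+1 in
  if (p == 0)%N && (q == 0)%N then uj / Kof U
  else if (p == 0)%N && (q == j.+1)%N then 1
  else if (1 <= p <= 3)%N && (q == p)%N then Rof U * uj
  else if (1 <= p <= 3)%N && (4 <= q <= 6)%N then
     (if (p.-1 == q.-2.-2)%N then - Ue U j.+4 else 0)
     + (if (p.-1 == j)%N then Ue U q else 0)
  else if (4 <= p)%N && (q == p)%N then uj
  else 0.
Definition Aj (j : 'I_3) (U : 'cV[R]_8) : 'M[R]_8 :=
  \matrix_(a, b) (if (a <= b)%N then c0 j U a b else c0 j U b a).

Lemma Aj_sym j U : (Aj j U)^T = Aj j U.
Proof.
apply/matrixP => a b; rewrite !mxE.
by case: (ltngtP a b) => [h|h|->]; rewrite ?(ltnW h) ?leqNgt ?h.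
Qed.

Hypotheses (a1 : 1 <= alpha) (g1 : 1 <= gamma) (A0 : 0 < A).

Lemma mono (S m1 m2 : R) : 0 <= S -> 0 < m1 -> m1 < m2 ->
  (S * m1) `^ alpha + A * m1 `^ gamma < (S * m2) `^ alpha + A * m2 `^ gamma.
Proof.
move=> S0 m10 m12; have m20 : 0 < m2 by apply: lt_trans m12.
apply: ler_ltD.
  apply: ge0_ler_powR; first by apply: le_trans a1.
  - by rewrite nnegrE mulr_ge0 // ltW.
  - by rewrite nnegrE mulr_ge0 // ltW.
  by rewrite ler_wpM2l // ltW.
rewrite ltr_pM2l //; apply: gt0_ltr_powR => //; first by apply: lt_le_trans g1.
  by rewrite nnegrE ltW.
by rewrite nnegrE ltW.
Qed.

Lemma Nuniq (S m1 m2 : R) : 0 <= S -> 0 < m1 -> 0 < m2 ->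
  (S * m1) `^ alpha + A * m1 `^ gamma = (S * m2) `^ alpha + A * m2 `^ gamma -> m1 = m2.
Proof.
move=> S0 m10 m20 e; case: (ltgtP m1 m2) => // h.
  by have := mono S0 m10 h; rewrite e ltxx.
by have := mono S0 m20 h; rewrite e ltxx.
Qed.

Variables (n rho : sfield R) (u H : vfield R) (t : R) (x : 'rV[R]_3).
Hypotheses (n0 : 0 < n t x) (r0 : 0 <= rho t x).

Notation U := (Uvec alpha gamma A n rho u H t x).

Lemma inord3 (m : nat) (h : (m < 3)%N) : (inord m : 'I_3) = Ordinal h.
Proof. by apply: val_inj; rewrite /= inordK. Qed.

Lemma UE0 : Ue U 0 = Pf alpha gamma A n rho t x.
Proof. by rewrite /Ue /Uvec mxE /Ucomp inordK. Qed.
Lemma UE1 : Ue U 1 = u i0 t x.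
Proof. by rewrite /Ue /Uvec mxE /Ucomp inordK //= (inord3 (isT : (0 < 3)%N)). Qed.
Lemma UE2 : Ue U 2 = u i1 t x.
Proof. by rewrite /Ue /Uvec mxE /Ucomp inordK //= (inord3 (isT : (1 < 3)%N)). Qed.
Lemma UE3 : Ue U 3 = u i2 t x.
Proof. by rewrite /Ue /Uvec mxE /Ucomp inordK //= (inord3 (isT : (2 < 3)%N)). Qed.
Lemma UE4 : Ue U 4 = H i0 t x.
Proof. by rewrite /Ue /Uvec mxE /Ucomp inordK //= (inord3 (isT : (0 < 3)%N)). Qed.
Lemma UE5 : Ue U 5 = H i1 t x.
Proof. by rewrite /Ue /Uvec mxE /Ucomp inordK //= (inord3 (isT : (1 < 3)%N)). Qed.
Lemma UE6 : Ue U 6 = H i2 t x.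
Proof. by rewrite /Ue /Uvec mxE /Ucomp inordK //= (inord3 (isT : (2 < 3)%N)). Qed.
Lemma UE7 : Ue U 7 = Sf n rho t x.
Proof. by rewrite /Ue /Uvec mxE /Ucomp inordK. Qed.

Lemma NE : Nof U = n t x.
Proof.
have nn0 : n t x != 0 by rewrite gt_eqF.
have S0 : 0 <= Sf n rho t x by rewrite /Sf divr_ge0 // ltW.
rewrite /Nof UE0 UE7.
set P := (fun m : R => _).
have Pn : P (n t x).
  by split => //; rewrite /Sf divfK.
have [m0 Pm] := getPex (ex_intro P _ Pn).
apply: (Nuniq S0 m0 n0); rewrite Pm; case: Pn => _ ->; done.
Qed.

Lemma RE : Rof U = Rf n rho t x.
Proof.
have nn0 : n t x != 0 by rewrite gt_eqF.
by rewrite /Rof NE UE7 /Rf /Sf; field.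
Qed.

Lemma KE : Kof U = Rf n rho t x * PRf alpha gamma A n rho t x.
Proof.
have nn0 : n t x != 0 by rewrite gt_eqF.
rewrite KR // /Kof NE UE7 /Sf divfK // (mulrC (rho t x `^ _)) (mulrC (n t x `^ _)).
rewrite !mulr_powRB1 // ?ltW //; [exact: lt_le_trans g1 | exact: lt_le_trans a1].
Qed.

End Mat.

Set Implicit Arguments. Unset Strict Implicit.

Lemma sum8 (R : realType) (F : 'I_8 -> R) : \sum_(j < 8) F j =
  F (@Ordinal 8 0 isT) + F (@Ordinal 8 1 isT) + F (@Ordinal 8 2 isT) + F (@Ordinal 8 3 isT)
  + F (@Ordinal 8 4 isT) + F (@Ordinal 8 5 isT) + F (@Ordinal 8 6 isT) + F (@Ordinal 8 7 isT).
Proof.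
rewrite !big_ord_recr big_ord0 /= GRing.add0r.
congr (F _ + F _ + F _ + F _ + F _ + F _ + F _ + F _); exact: val_inj.
Qed.

Lemma in0 : (inord 0 : 'I_3) = i0. Proof. by apply: val_inj; rewrite /= inordK. Qed.
Lemma in1 : (inord 1 : 'I_3) = i1. Proof. by apply: val_inj; rewrite /= inordK. Qed.
Lemma in10 : (inord (1 - 1) : 'I_3) = i0. Proof. by apply: val_inj; rewrite /= inordK. Qed.
Lemma in21 : (inord (2 - 1) : 'I_3) = i1. Proof. by apply: val_inj; rewrite /= inordK. Qed.
Lemma in32 : (inord (3 - 1) : 'I_3) = i2. Proof. by apply: val_inj; rewrite /= inordK. Qed.
Lemma in40 : (inord (4 - 4) : 'I_3) = i0. Proof. by apply: val_inj; rewrite /= inordK. Qed.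
Lemma in51 : (inord (5 - 4) : 'I_3) = i1. Proof. by apply: val_inj; rewrite /= inordK. Qed.
Lemma in62 : (inord (6 - 4) : 'I_3) = i2. Proof. by apply: val_inj; rewrite /= inordK. Qed.
Lemma in2 : (inord 2 : 'I_3) = i2. Proof. by apply: val_inj; rewrite /= inordK. Qed.

Section Ent.
Variable R : realType.
Definition o8 (m : nat) (h : (m < 8)%N) : 'I_8 := Ordinal h.
Lemma colE (F : 'I_8 -> R) k : (\col_(i < 8) F i) k 0 = F k.
Proof. by rewrite mxE. Qed.
Lemma mul8 (M : 'M[R]_8) (v : 'cV[R]_8) k : (M *m v) k 0 =
  M k (@Ordinal 8 0 isT) * v (@Ordinal 8 0 isT) 0 + M k (@Ordinal 8 1 isT) * v (@Ordinal 8 1 isT) 0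
  + M k (@Ordinal 8 2 isT) * v (@Ordinal 8 2 isT) 0 + M k (@Ordinal 8 3 isT) * v (@Ordinal 8 3 isT) 0
  + M k (@Ordinal 8 4 isT) * v (@Ordinal 8 4 isT) 0 + M k (@Ordinal 8 5 isT) * v (@Ordinal 8 5 isT) 0
  + M k (@Ordinal 8 6 isT) * v (@Ordinal 8 6 isT) 0 + M k (@Ordinal 8 7 isT) * v (@Ordinal 8 7 isT) 0.
Proof. by rewrite mxE sum8. Qed.
Lemma sum3m (M : 'I_3 -> 'cV[R]_8) k : (\sum_(j < 3) M j) k 0 = M i0 k 0 + M i1 k 0 + M i2 k 0.
Proof. by rewrite summxE sum3. Qed.
Lemma addm (a b : 'cV[R]_8) k : (a + b) k 0 = a k 0 + b k 0.
Proof. by rewrite mxE. Qed.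
End Ent.

Section Eq.
Variables (R : realType) (alpha gamma A : R) (n rho : sfield R) (u H : vfield R)
  (t : R) (x : 'rV[R]_3).
Hypotheses (a1 : 1 <= alpha) (g1 : 1 <= gamma) (Ap : 0 < A).
Hypotheses (dn : forall d, Der d n t x) (dr : forall d, Der d rho t x)
  (du : forall i d, Der d (u i) t x) (dH : forall i d, Der d (H i) t x)
  (pn : forall d, Pos d n t x) (pr : forall d, Pos d rho t x)
  (n0 : 0 < n t x) (r0 : 0 <= rho t x).

Lemma A0E k b : A0 alpha gamma A n rho t x k b =
   (if (k == 0 :> nat) then 1 / (Rf n rho t x * PRf alpha gamma A n rho t x)
    else if (k <= 3)%N then Rf n rho t x else 1) *+ (k == b).
Proof. by rewrite /A0 !mxE. Qed.
Lemma dtUE b : dtU alpha gamma A n rho u H t x b 0 = dt (Ucomp alpha gamma A n rho u H b) t x.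
Proof. by rewrite /dtU colE. Qed.
Lemma dxUE j b : dxU alpha gamma A n rho u H j t x b 0 = dx j (Ucomp alpha gamma A n rho u H b) t x.
Proof. by rewrite /dxU colE. Qed.
Lemma AjE j U a b : Aj alpha gamma A j U a b =
  if (a <= b)%N then c0 alpha gamma A j U a b else c0 alpha gamma A j U b a.
Proof. by rewrite /Aj mxE. Qed.
Lemma EvE k : Evec alpha gamma A n rho u H t x k 0 = Ecomp alpha gamma A n rho u H k t x.
Proof. by rewrite /Evec colE. Qed.

Lemma A0dt k : (A0 alpha gamma A n rho t x *m dtU alpha gamma A n rho u H t x) k 0 =
   (if (k == 0 :> nat) then 1 / (Rf n rho t x * PRf alpha gamma A n rho t x)
    else if (k <= 3)%N then Rf n rho t x else 1) * dt (Ucomp alpha gamma A n rho u H k) t x.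
Proof. by rewrite /A0 mul_diag_mx !mxE. Qed.

Lemma AjdxE j k : (Aj alpha gamma A j (Uvec alpha gamma A n rho u H t x)
     *m dxU alpha gamma A n rho u H j t x) k 0 =
  \sum_(b < 8) (if (k <= b)%N then c0 alpha gamma A j (Uvec alpha gamma A n rho u H t x) k b
       else c0 alpha gamma A j (Uvec alpha gamma A n rho u H t x) b k)
     * dx j (Ucomp alpha gamma A n rho u H b) t x.
Proof. by rewrite mxE; apply: eq_bigr => b _; rewrite AjE dxUE. Qed.

Lemma Eeq : Evec alpha gamma A n rho u H t x =
  A0 alpha gamma A n rho t x *m dtU alpha gamma A n rho u H t x
  + \sum_(j < 3) Aj alpha gamma A j (Uvec alpha gamma A n rho u H t x)
                   *m dxU alpha gamma A n rho u H j t x.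
Proof.
have Cqx : forall k, dx k (qf alpha gamma A n rho H) t x =
   dx k (Pf alpha gamma A n rho) t x + \sum_(k' < 3) H k' t x * dx k (H k') t x :=
  fun k => Cq A a1 g1 dn dr dH pn pr (Some k).
apply/matrixP => k c; rewrite (ord1 c) {c}.
rewrite EvE addm A0dt sum3m !AjdxE.
rewrite !sum8.
case: k => [[|[|[|[|[|[|[|[|m]]]]]]]] hk] //.
all: rewrite /= /c0 /Ucomp /Ecomp /=.
all: rewrite ?in10 ?in21 ?in32 ?in40 ?in51 ?in62.
all: rewrite ?UE0 ?UE1 ?UE2 ?UE3 ?UE4 ?UE5 ?UE6 ?UE7 ?KE ?RE //.
all: rewrite /eqP_lhs /equ_lhs /eqH_lhs /eqS_lhs /matder /div ?Cqx !sum3.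
all: genat t x; ring.
Qed.

End Eq.

Set Implicit Arguments. Unset Strict Implicit.

Lemma quad_pos (R : realType) (d : 'rV[R]_8) (v : 'cV[R]_8) :
  (forall k, 0 < d 0 k) -> v != 0 -> 0 < (v^T *m diag_mx d *m v) 0 0.
Proof.
move=> dp vn0.
case: (pickP (fun i => v i 0 != 0)) => [i vi|h]; last first.
  exfalso; move/negP: vn0; apply; apply/eqP/matrixP => a b.
  by rewrite (ord1 b) mxE; move/negbFE: (h a) => /eqP.
rewrite mxE (bigD1 i) //= mul_mx_diag !mxE.
have t1 : 0 < v i 0 * d 0 i * v i 0.
  have s : 0 < v i 0 ^+ 2 by rewrite lt_def sqrf_eq0 vi sqr_ge0.
  by rewrite mulrAC -expr2 mulr_gt0.
apply: (lt_le_trans t1); rewrite lerDl; apply: sumr_ge0 => j _.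
rewrite !mxE mulrAC -expr2 mulr_ge0 ?sqr_ge0 //.
exact: ltW.
Qed.

Unset Implicit Arguments. Set Strict Implicit.

Theorem mainTheorem1 (R : realType) (alpha gamma A : R) :
  1 <= alpha -> 1 <= gamma -> 0 < A ->
  exists Aj : 'I_3 -> 'cV[R]_8 -> 'M[R]_8,
    (forall (j : 'I_3) (U : 'cV[R]_8), (Aj j U)^T = Aj j U) /\
    forall (T : R) (n rho : sfield R) (u H : vfield R),
      C1on T n -> C1on T rho ->
      (forall i, C1on T (u i)) -> (forall i, C1on T (H i)) ->
      (forall t x, inslab T t -> 0 < n t x) ->
      (forall t x, inslab T t -> 0 <= rho t x) ->
      (forall t x, inslab T t -> div H t x = 0) ->
      ((forall t x, inslab T t -> sys1_at alpha gamma A n rho u H t x) <->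
       (forall t x, inslab T t -> sys2_at alpha gamma A n rho u H t x)) /\
      (forall t x, inslab T t ->
         Evec alpha gamma A n rho u H t x =
           A0 alpha gamma A n rho t x *m dtU alpha gamma A n rho u H t x
           + \sum_(j < 3) Aj j (Uvec alpha gamma A n rho u H t x)
                            *m dxU alpha gamma A n rho u H j t x) /\
      (forall t x, inslab T t ->
         forall v : 'cV[R]_8, v != 0 ->
           0 < (v^T *m A0 alpha gamma A n rho t x *m v) 0 0).
Proof.
move=> a1 g1 Ap.
exists (Aj alpha gamma A); split; first exact: Aj_sym.
move=> T n rho u H Cn Cr Cu CH npos rpos divH.
have npos' : forall t x, inslab T t -> 0 <= n t x by move=> t x h; exact: ltW (npos t x h).
have P := fun t x (ht : inslab T t) =>
  point_equiv a1 g1 Ap (der_of Cn x ht) (der_of Cr x ht)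
    (fun i => der_of (Cu i) x ht) (fun i => der_of (CH i) x ht)
    (pos_of npos' x ht) (pos_of rpos x ht) (npos t x ht) (rpos t x ht) (divH t x ht).
split; [|split].
- split => h t x ht; apply/(P t x ht); exact: h.
- move=> t x ht.
  exact: (Eeq u a1 g1 Ap (der_of Cn x ht) (der_of Cr x ht)
    (fun i => der_of (CH i) x ht) (pos_of npos' x ht) (pos_of rpos x ht)
    (npos t x ht) (rpos t x ht)).
- move=> t x ht v vn0; rewrite /A0; apply: quad_pos => // k; rewrite mxE.
  have n0 := npos t x ht; have r0 := rpos t x ht.
  have R0 : 0 < Rf n rho t x by rewrite /Rf ltr_wpDl.
  case: ifP => _; last by case: ifP.
  rewrite (KR A a1 g1 n0 r0) div1r invr_gt0.
  have al0 : 0 < alpha by apply: lt_le_trans a1.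
  have ga0 : 0 < gamma by apply: lt_le_trans g1.
  have h1 : 0 <= alpha * (rho t x `^ (alpha - 1) * rho t x) by rewrite mulr_ge0 ?mulr_ge0 ?powR_ge0 // ltW.
  have h2 : 0 < gamma * A * (n t x `^ (gamma - 1) * n t x) by rewrite !mulr_gt0 // powR_gt0.
  lra.
Qed.
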